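(* Let $n\ge3$, $l\ge1$, $\mathfrak g=A^{(2)}_{2n-1}$, $B$ the level-$l$ perfect crystal of the context, $\lambda=l\Lambda_0$, $d=2n-1$, and $i^{(j)}_1=i^{(j)}_{2n-1}=\epsilon(j+1)$, $i^{(j)}_a=i^{(j)}_{2n-a}=a$ for $2\le a\le n$. Then: (II) $B^{(j)}_d=B$ for all $j\ge1$; (III) $\langle\lambda_j,h_{i^{(j)}_a}\rangle\le\varepsilon_{i^{(j)}_a}(b)$ for all $j\ge1$, $1\le a\le d$, $b\in B^{(j)}_{a-1}$; (IV') for all $j\ge1$, $a=1,\dots,d$: $\varepsilon_{i^{(j)}_{a+1}}(b^{(j)}_a)=0$, $\varphi_{i^{(j)}_{a+1}}(b^{(j)}_a)>0$ (with $i^{(j)}_{d+1}:=i^{(j+1)}_1$), and $b^{(j+1)}_0=\tilde f_{i^{(j+1)}_1}^mb^{(j)}_d$ with $m=\langle\lambda_{j+1},h_{i^{(j+1)}_1}\rangle$. Moreover $B^{(j)}_0=\{(0,\dots,0,l)\}$ ($j$ odd), $\{(l,0,\dots,0)\}$ ($j$ even), $B^{(j)}_{2n-1}=B$, and for $1\le a\le n-1$: $B^{(j)}_a$ is the set of $b\in B$ with all coordinates $0$ except possibly $x_2,\dots,x_{a+1},\bar x_1$ ($j$ odd), resp. $x_1,\dots,x_{a+1}$ ($j$ even); $B^{(j)}_{n+a-1}$ is the set of $b\in B$ with all coordinates $0$ except possibly $x_2,\dots,x_n,\bar x_n,\dots,\bar x_{n-a+1},\bar x_1$ ($j$ odd),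 resp. $x_1,\dots,x_n,\bar x_n,\dots,\bar x_{n-a+1}$ ($j$ even). Also $b^{(j)}_0=(0,\dots,0,l)$ ($j$ odd), $(l,0,\dots,0)$ ($j$ even); $b^{(j)}_{2n-1}=(l,0,\dots,0)$ ($j$ odd), $(0,\dots,0,l)$ ($j$ even); and for $1\le a\le n-1$, $b^{(j)}_a$ has $x_{a+1}=l$ and $b^{(j)}_{n+a-1}$ has $\bar x_{n-a+1}=l$, all other coordinates $0$.
   Context: $\epsilon(i)=0$ for $i$ even and $1$ for $i$ odd; $(x)_+=\max(x,0)$. $B=\{(x_1,\dots,x_n,\bar x_n,\dots,\bar x_1)\in\mathbb Z^{2n}: x_i,\bar x_i\ge0,\ \sum_{i=1}^n(x_i+\bar x_i)=l\}$. Crystal structure: $\tilde f_0b=(x_1,x_2+1,\dots,\bar x_2,\bar x_1-1)$ if $x_2\ge\bar x_2$, $(x_1+1,x_2,\dots,\bar x_2-1,\bar x_1)$ if $x_2<\bar x_2$; for $1\le i\le n-1$, $\tilde f_ib$ replaces $(x_i,x_{i+1})$ by $(x_i-1,x_{i+1}+1)$ if $x_{i+1}\ge\bar x_{i+1}$, and $(\bar x_{i+1},\bar x_i)$ by $(\bar x_{i+1}-1,\bar x_i+1)$ if $x_{i+1}<\bar x_{i+1}$; $\tilde f_nb$ replaces $(x_n,\bar x_n)$ by $(x_n-1,\bar x_n+1)$; $\tilde e_ib=b'$ iff $\tilde f_ib'=b$; results outside $B$ mean $0$. $\varphi_0(b)=\bar x_1+(\bar x_2-x_2)_+$, $\varepsilon_0(b)=x_1+(x_2-\bar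 x_2)_+$; $\varphi_i(b)=x_i+(\bar x_{i+1}-x_{i+1})_+$, $\varepsilon_i(b)=\bar x_i+(x_{i+1}-\bar x_{i+1})_+$ ($1\le i\le n-1$); $\varphi_n(b)=x_n$, $\varepsilon_n(b)=\bar x_n$. For $\lambda=l\Lambda_0$: $\lambda_j=l\Lambda_{\epsilon(j)}$, $\overline b_j=(0,\dots,0,l)$ ($j$ odd), $(l,0,\dots,0)$ ($j$ even); $\langle\lambda_j,h_i\rangle$ is the coefficient of $\Lambda_i$ in $\lambda_j$. Given $d$, $i^{(j)}_a$: $B^{(j)}_0=\{\overline b_j\}$, $B^{(j)}_a=\bigcup_{n\ge0}\tilde f_{i^{(j)}_a}^nB^{(j)}_{a-1}\setminus\{0\}$; $b^{(j)}_0=\overline b_j$, $b^{(j)}_a=\tilde f_{i^{(j)}_a}^{\varphi_{i^{(j)}_a}(b^{(j)}_{a-1})}b^{(j)}_{a-1}$. *)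

(* Defs.v *)
(* Crystal B for A^{(2)}_{2n-1}, level l.
   An element b = (x_1,...,x_n,xb_n,...,xb_1) is a list of 2n naturals:
   position k-1 holds x_k, position 2n-k holds xb_k. *)
From mathcomp Require Import all_boot.
Set Implicit Arguments. Unset Strict Implicit. Unset Printing Implicit Defensive.

Section Crystal.
Variables (n l : nat).

Definition inB (b : seq nat) : bool := (size b == 2 * n) && (sumn b == l).

Definition px (k : nat) := k.-1.
Definition pxb (k : nat) := 2 * n - k.
Definition xc (b : seq nat) k := nth 0 b (px k).
Definition xbc (b : seq nat) k := nth 0 b (pxb k).

Definition incr (p : nat) (b : seq nat) := set_nth 0 b p (nth 0 b p).+1.
(* decrement coordinate p; None (= the crystal 0) if it would become negative *)
Definition decr (p : nat) (b : seq nat) : option (seq nat) :=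
  if 0 < nth 0 b p then Some (set_nth 0 b p (nth 0 b p).-1) else None.

(* Kashiwara operator f_i; None stands for 0 *)
Definition fop (i : nat) (b : seq nat) : option (seq nat) :=
  if i == 0 then
    if xbc b 2 <= xc b 2 then omap (incr (px 2)) (decr (pxb 1) b)
    else omap (incr (px 1)) (decr (pxb 2) b)
  else if i < n then
    if xbc b i.+1 <= xc b i.+1 then omap (incr (px i.+1)) (decr (px i) b)
    else omap (incr (pxb i)) (decr (pxb i.+1) b)
  else if i == n then omap (incr (pxb n)) (decr (px n) b)
  else None.

Fixpoint fpow (i k : nat) (b : seq nat) : option (seq nat) :=
  if k is k'.+1 then obind (fop i) (fpow i k' b) else Some b.

(* (x)_+ is truncated subtraction on nat *)
Definition eps (i : nat) (b : seq nat) : nat :=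
  if i == 0 then xc b 1 + (xc b 2 - xbc b 2)
  else if i < n then xbc b i + (xc b i.+1 - xbc b i.+1)
  else if i == n then xbc b n else 0.

Definition phi (i : nat) (b : seq nat) : nat :=
  if i == 0 then xbc b 1 + (xbc b 2 - xc b 2)
  else if i < n then xc b i + (xbc b i.+1 - xc b i.+1)
  else if i == n then xc b n else 0.

Definition vec_x (k : nat) : seq nat := set_nth 0 (nseq (2 * n) 0) (px k) l.
Definition vec_xb (k : nat) : seq nat := set_nth 0 (nseq (2 * n) 0) (pxb k) l.

(* epsilon(j) = odd j ; lambda_j = l Lambda_{epsilon(j)} *)
Definition lam_h (j i : nat) : nat := if i == (odd j : nat) then l else 0.

Definition bbar (j : nat) : seq nat := if odd j then vec_xb 1 else vec_x 1.

Definition idx (j a : nat) : nat :=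
  if (a == 1) || (a == 2 * n - 1) then (odd j.+1 : nat)
  else if a <= n then a else 2 * n - a.

Fixpoint Bset (j a : nat) (b : seq nat) : Prop :=
  if a is a'.+1 then exists b' k, Bset j a' b' /\ fpow (idx j a) k b' = Some b
  else b = bbar j.

Fixpoint bvec (j a : nat) : option (seq nat) :=
  if a is a'.+1 then
    obind (fun b => fpow (idx j a) (phi (idx j a) b) b) (bvec j a')
  else Some (bbar j).

Definition suppB (Ax Axb : pred nat) (b : seq nat) : Prop :=
  inB b /\ forall k, 1 <= k <= n ->
    (~~ Ax k -> xc b k = 0) /\ (~~ Axb k -> xbc b k = 0).

End Crystal.

(* Main.v *)
Require Import Defs.
From mathcomp Require Import all_boot.
From mathcomp Require Import zify.
Set Implicit Arguments. Unset Strict Implicit. Unset Printing Implicit Defensive.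

Ltac splitifs := repeat match goal with |- context [if ?c then _ else _] =>
  let h := fresh "h" in
  lazymatch c with context [if _ then _ else _] => fail | _ => case: (boolP c) => h end end.

Section Pf.
Variables (n l : nat).
Hypothesis hn : 3 <= n.
Hypothesis hl : 1 <= l.

Definition move (p q : nat) (b : seq nat) := omap (incr q) (decr p b).
Definition Sp (A : pred nat) (b : seq nat) :=
  inB n l b /\ forall p, ~~ A p -> nth 0 b p = 0.
Definition ee (p : nat) : seq nat := set_nth 0 (nseq (2 * n) 0) p l.

Ltac nths := rewrite /incr /decr ?nth_set_nth /= .

Lemma fop_mid i b : 1 <= i < n -> fop n i b =
  if nth 0 b (2*n - i.+1) <= nth 0 b i then move i.-1 i b
  else move (2*n - i.+1) (2*n - i) b.
Proof.
move=> hi; rewrite /fop; have -> : (i == 0) = false by lia.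
by rewrite (_ : i < n = true) //; lia.
Qed.

Lemma fop_n b : fop n n b = move n.-1 n b.
Proof.
rewrite /fop; have -> : (n == 0) = false by lia.
by rewrite ltnn eqxx /pxb (_ : 2 * n - n = n) //; lia.
Qed.

Lemma fop_0 b : fop n 0 b =
  if nth 0 b (2*n - 2) <= nth 0 b 1 then move (2*n-1) 1 b
  else move (2*n - 2) 0 b.
Proof. by []. Qed.

Lemma eps_mid i b : 1 <= i < n ->
  eps n i b = nth 0 b (2*n - i) + (nth 0 b i - nth 0 b (2*n - i.+1)).
Proof.
move=> hi; rewrite /eps; have -> : (i == 0) = false by lia.
by rewrite (_ : i < n = true) //; lia.
Qed.

Lemma phi_mid i b : 1 <= i < n ->
  phi n i b = nth 0 b i.-1 + (nth 0 b (2*n - i.+1) - nth 0 b i).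
Proof.
move=> hi; rewrite /phi; have -> : (i == 0) = false by lia.
by rewrite (_ : i < n = true) //; lia.
Qed.

Lemma eps_n b : eps n n b = nth 0 b n.
Proof.
rewrite /eps; have -> : (n == 0) = false by lia.
by rewrite ltnn eqxx /xbc /pxb (_ : 2 * n - n = n) //; lia.
Qed.
Lemma phi_n b : phi n n b = nth 0 b n.-1.
Proof.
rewrite /phi; have -> : (n == 0) = false by lia.
by rewrite ltnn eqxx.
Qed.
Lemma eps_0 b : eps n 0 b = nth 0 b 0 + (nth 0 b 1 - nth 0 b (2*n-2)).
Proof. by []. Qed.
Lemma phi_0 b : phi n 0 b = nth 0 b (2*n-1) + (nth 0 b (2*n-2) - nth 0 b 1).
Proof. by []. Qed.

Lemma nth_le_sumn (b : seq nat) p : nth 0 b p <= sumn b.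
Proof.
elim: b p => [|x b IH] [|p] //=; first lia.
have := IH p; lia.
Qed.

Lemma sumn_set b p x : sumn (set_nth 0 b p x) + nth 0 b p = sumn b + x.
Proof. rewrite sumn_set_nth0; have := nth_le_sumn b p; lia. Qed.

Lemma nth_set (s : seq nat) p y r : nth 0 (set_nth 0 s p y) r = if r == p then y else nth 0 s r.
Proof. by rewrite nth_set_nth. Qed.

Ltac ifs := repeat (case: ifP => /eqP ?); try lia.

Lemma nthK (b : seq nat) r : r < size b -> r < size b. Proof. by []. Qed.

Lemma move_Sp (A : pred nat) p q b c : p < 2 * n -> q < 2 * n -> A q -> Sp A b ->
  move p q b = Some c -> Sp A c.
Proof.
move=> hp hq hA [/andP[/eqP hs /eqP hsum] h0].
rewrite /move /decr; case: ifP => // hpos [<-]; rewrite /incr.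
split; first (apply/andP; split; apply/eqP).
- rewrite !size_set_nth; lia.
- have := sumn_set (set_nth 0 b p (nth 0 b p).-1) q (nth 0 (set_nth 0 b p (nth 0 b p).-1) q).+1.
  have := sumn_set b p (nth 0 b p).-1. lia.
- move=> r hr; rewrite !nth_set.
  case: (r =P q) => [? | _]; first by subst; rewrite hA in hr.
  case: (r =P p) => [? | _]; last exact: h0.
  subst; move: (h0 _ hr); lia.
Qed.

Definition predc p s (b : seq nat) :=
  set_nth 0 (set_nth 0 b s (nth 0 b s).-1) p (nth 0 b p).+1.

Lemma nth_predc p s b r : nth 0 (predc p s b) r =
  if r == p then (nth 0 b p).+1 else if r == s then (nth 0 b s).-1 else nth 0 b r.
Proof. by rewrite /predc !nth_set. Qed.

Lemma move_back (A : pred nat) p s b : p != s -> p < 2 * n -> s < 2 * n -> A p -> Sp A b ->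
  0 < nth 0 b s -> Sp A (predc p s b) /\ move p s (predc p s b) = Some b.
Proof.
move=> /eqP hps hp hs hA [/andP[/eqP hsz /eqP hsum] h0] hpos.
have hc := nth_predc p s b.
split.
- split; first (apply/andP; split; apply/eqP).
  + rewrite /predc !size_set_nth; lia.
  + have := sumn_set (set_nth 0 b s (nth 0 b s).-1) p (nth 0 b p).+1.
    have := sumn_set b s (nth 0 b s).-1. rewrite nth_set.
    case: eqP => ?; first lia. rewrite /predc. lia.
  + move=> r hr; rewrite hc; case: (r =P p) => [?|_]; first by subst; rewrite hA in hr.
    case: (r =P s) => [?|_]; last exact: h0.
    subst; move: (h0 _ hr); lia.
- rewrite /move /decr hc eqxx /=; congr Some.
  apply: (@eq_from_nth _ 0).
  + rewrite /incr /predc !size_set_nth; lia.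
  + move=> r _; rewrite /incr !nth_set ?hc /predc ?nth_set.
    have hsp : (s == p) = false by apply/eqP => e; apply: hps; rewrite e.
    by case: (r =P s) => [->|hrs]; case: (r =P p) => [?|?]; subst; rewrite ?hsp ?eqxx /=; lia.
Qed.

Lemma fpow_inv i (Q : seq nat -> Prop) :
  (forall b c, Q b -> fop n i b = Some c -> Q c) ->
  forall k b c, Q b -> fpow n i k b = Some c -> Q c.
Proof.
move=> H; elim=> [|k IH] b c hb /=; first by case=> <-.
case E: (fpow n i k b) => [d|] //= hd.
exact: (H d) (IH _ _ hb E) hd.
Qed.

Lemma reach i (P Q : seq nat -> Prop) (m : seq nat -> nat) :
  (forall b, Q b -> P b \/ exists c, [/\ Q c, m c < m b & fop n i c = Some b]) ->
  forall b, Q b -> exists c k, P c /\ fpow n i k c = Some b.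
Proof.
move=> H.
suff: forall N b, m b <= N -> Q b -> exists c k, P c /\ fpow n i k c = Some b.
  by move=> S b; apply: (S (m b)).
elim=> [|N IH] b hm hb.
- case: (H b hb) => [Pb|[c [_ hc _]]]; last lia.
  by exists b, 0.
- case: (H b hb) => [Pb|[c [Qc hc hf]]]; first by exists b, 0.
  have [d [k [Pd hk]]] := IH c ltac:(lia) Qc.
  by exists d, k.+1; split => //=; rewrite hk /=.
Qed.

Lemma Sp_mono (A A' : pred nat) b : (forall r, A r -> A' r) -> Sp A b -> Sp A' b.
Proof.
move=> hA [hb h0]; split => // r hr; apply: h0; apply/negP => /hA; by rewrite (negbTE hr).
Qed.

Lemma Sp_ext (A A' : pred nat) b : A =1 A' -> Sp A b <-> Sp A' b.
Proof. move=> e; split; apply: Sp_mono => r; by rewrite e. Qed.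

Lemma step_simple i p q (A A' : pred nat) (P : seq nat -> Prop) :
  (forall b, P b <-> Sp A b) -> (forall r, A' r = A r || (r == q)) -> A p ->
  p != q -> p < 2 * n -> q < 2 * n ->
  (forall b, Sp A' b -> fop n i b = move p q b) ->
  forall b, (exists b' k, P b' /\ fpow n i k b' = Some b) <-> Sp A' b.
Proof.
move=> hP hA' hAp hpq hp hq hf b; split.
- case=> [b' [k [Pb hk]]].
  apply: (fpow_inv _ _ hk).
  + move=> x y hx; rewrite hf //; apply: move_Sp => //; by rewrite hA' eqxx orbT.
  + apply: Sp_mono (proj1 (hP _) Pb) => r; rewrite hA' => ->.
    done.
- move=> hb; apply: (reach (m := fun b => nth 0 b q)) hb => {b} b hb.
  case: (posnP (nth 0 b q)) => hq0.
  + left; apply/hP; split; first exact: hb.1.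
    move=> r hr; case: (r =P q) => [->//|/eqP rq]; apply: hb.2; by rewrite hA' (negbTE hr) (negbTE rq).
  + right; have hAp' : A' p by rewrite hA' hAp.
    have [hc hm] := move_back hpq hp hq hAp' hb hq0.
    exists (predc p q b); split => //; last by rewrite hf.
    rewrite nth_predc eq_sym (negbTE hpq) eqxx; lia.
Qed.

Lemma step_mixed i p q r s (A A' : pred nat) (P : seq nat -> Prop) :
  (forall b, P b <-> Sp A b) -> (forall x, A' x = A x || (x == q)) -> A p -> A r -> A s ->
  uniq [:: p; q; r; s] -> p < 2 * n -> q < 2 * n -> r < 2 * n -> s < 2 * n ->
  (forall b, fop n i b = if nth 0 b r <= nth 0 b s then move p s b else move r q b) ->
  forall b, (exists b' k, P b' /\ fpow n i k b' = Some b) <-> Sp A' b.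
Proof.
move=> hP hA' hAp hAr hAs hu hp hq hr hs hf b.
have hA'q : A' q by rewrite hA' eqxx orbT.
have hA's : A' s by rewrite hA' hAs.
have hA'p : A' p by rewrite hA' hAp.
have hA'r : A' r by rewrite hA' hAr.
move: hu; rewrite /= !inE !negb_or -!andbA => /and4P[/eqP pq /eqP pr /eqP ps /and4P[/eqP qr /eqP qs /eqP rs _]].
split.
- case=> [b' [k [Pb hk]]].
  apply: (fpow_inv _ _ hk).
  + move=> x y hx; rewrite hf; case: ifP => _ hm; apply: (move_Sp _ _ _ hx hm) => //.
  + apply: Sp_mono (proj1 (hP _) Pb) => x; rewrite hA' => ->.
    done.
- move=> hb; apply: (reach (m := fun b => nth 0 b q + (nth 0 b s - nth 0 b r))) hb => {b} b hb.
  have F1 : (p == q) = false by apply/eqP; lia.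
  have F2 : (p == r) = false by apply/eqP; lia.
  have F3 : (p == s) = false by apply/eqP; lia.
  have F4 : (q == p) = false by apply/eqP; lia.
  have F5 : (q == r) = false by apply/eqP; lia.
  have F6 : (q == s) = false by apply/eqP; lia.
  have F7 : (r == p) = false by apply/eqP; lia.
  have F8 : (r == q) = false by apply/eqP; lia.
  have F9 : (r == s) = false by apply/eqP; lia.
  have F10 : (s == p) = false by apply/eqP; lia.
  have F11 : (s == q) = false by apply/eqP; lia.
  have F12 : (s == r) = false by apply/eqP; lia.
  case: (ltnP (nth 0 b r) (nth 0 b s)) => hrs.
  + right; have [hc hm] := move_back (introN eqP ps) hp hs hA'p hb ltac:(lia).
    exists (predc p s b); split => //.
    * rewrite !nth_predc ?eqxx ?F1 ?F2 ?F3 ?F4 ?F5 ?F6 ?F7 ?F8 ?F9 ?F10 ?F11 ?F12; lia.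
    * rewrite hf !nth_predc ?eqxx ?F1 ?F2 ?F3 ?F4 ?F5 ?F6 ?F7 ?F8 ?F9 ?F10 ?F11 ?F12.
      by case: ifP => //; lia.
  + case: (posnP (nth 0 b q)) => hq0.
    * left; apply/hP; split; first exact: hb.1.
      move=> x hx; case: (x =P q) => [->//|/eqP xq]; apply: hb.2; by rewrite hA' (negbTE hx) (negbTE xq).
    * right; have [hc hm] := move_back (negbT F8) hr hq hA'r hb hq0.
      exists (predc r q b); split => //.
      - rewrite !nth_predc ?eqxx ?F1 ?F2 ?F3 ?F4 ?F5 ?F6 ?F7 ?F8 ?F9 ?F10 ?F11 ?F12; lia.
      - rewrite hf !nth_predc ?eqxx ?F1 ?F2 ?F3 ?F4 ?F5 ?F6 ?F7 ?F8 ?F9 ?F10 ?F11 ?F12.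
        by case: ifP => //; lia.
Qed.

Definition At (j t : nat) : pred nat := fun p =>
  (p <= t) && (~~ odd j || (0 < p)) || (odd j && (p == 2 * n - 1)).

Lemma nth_ee s r : nth 0 (ee s) r = if r == s then l else 0.
Proof. rewrite /ee nth_set nth_nseq; by case: (r == s); case: (r < 2 * n). Qed.

Lemma Sp_single (A : pred nat) s b : s < 2 * n -> (forall x, A x = (x == s)) ->
  Sp A b <-> b = ee s.
Proof.
move=> hs hA; split.
- case=> /andP[/eqP hsz /eqP hsum] h0.
  have E : b = set_nth 0 (nseq (2 * n) 0) s (nth 0 b s).
    apply: (@eq_from_nth _ 0); first by rewrite size_set_nth size_nseq; lia.
    move=> r _; rewrite nth_set nth_nseq; case: (r =P s) => [->//|/eqP rs].
    rewrite h0 ?hA ?rs //; by case: ifP.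
  have : sumn b = nth 0 b s.
    rewrite {1}E sumn_set_nth_ltn ?size_nseq // sumn_nseq nth_nseq hs; lia.
  rewrite hsum => e; rewrite E -e //.
- move=> ->; split.
  + apply/andP; split; apply/eqP; first by rewrite /ee size_set_nth size_nseq; lia.
    rewrite /ee sumn_set_nth_ltn ?size_nseq // sumn_nseq nth_nseq hs; lia.
  + move=> r; rewrite hA nth_ee => /negbTE ->. done.
Qed.

Lemma odd_notA j t x : 1 <= t -> t.+1 <= 2 * n - 2 -> ~~ At j t.+1 x -> ~~ At j t x.
Proof. rewrite /At; case: (odd j) => /=; lia. Qed.

Lemma idx_mid j a : 2 <= a <= 2 * n - 2 -> idx n j a = if a <= n then a else 2 * n - a.
Proof. move=> ha; rewrite /idx; have -> : (a == 1) || (a == 2 * n - 1) = false by lia. done. Qed.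

Lemma Bset_char j t : t <= 2 * n - 2 -> forall b, Bset n l j t b <-> Sp (At j t) b.
Proof.
elim: t => [|t IH] ht b.
- rewrite /=. rewrite (@Sp_single _ (if odd j then 2 * n - 1 else 0)); last 2 first.
  + case: (odd j); lia.
  + move=> x; rewrite /At; case: (odd j) => /=; lia.
  rewrite /bbar /vec_xb /vec_x /ee /px /pxb; case: (odd j) => //.
- have IH' := IH ltac:(lia).
  rewrite /=.
  have hA' : forall x, At j t.+1 x = At j t x || (x == t.+1).
    move=> x; rewrite /At; case: (odd j) => /=; lia.
  case: (posnP t) => [t0|tpos].
  + subst t. case oj: (odd j).
    *
      have -> : idx n j 1 = 0 by rewrite /idx /= oj.
      apply: (step_simple (A := At j 0) (p := 2 * n - 1)) => //.
      -- by rewrite /At oj /=; lia.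
      -- apply/eqP; lia.
      -- lia.
      -- lia.
      -- move=> c hc; rewrite fop_0 (hc.2 (2 * n - 2)) //.
         rewrite /At oj /=; lia.
    * have -> : idx n j 1 = 1 by rewrite /idx /= oj.
      apply: (step_simple (A := At j 0) (p := 0)) => //.
      -- by rewrite /At oj /=.
      -- lia.
      -- lia.
      -- move=> c hc; rewrite fop_mid; last lia. rewrite (hc.2 (2 * n - 2)) //.
         rewrite /At oj /=; lia.
  + case: (ltnP t.+1 n) => htn.
    * rewrite idx_mid ?ifT; try lia.
      apply: (step_simple (A := At j t) (p := t)) => //;
        try (apply/eqP; lia); try lia; try (rewrite /At; case: (odd j) => /=; lia).
      move=> c hc; rewrite fop_mid; last lia.
      rewrite (hc.2 (2 * n - t.+2)) //.
      rewrite /At; case: (odd j) => /=; lia.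
    * case: (t.+1 =P n) => [htn'|htn'].
      -- rewrite idx_mid ?ifT; try lia.
         apply: (step_simple (A := At j t) (p := t)) => //;
           try (apply/eqP; lia); try lia; try (rewrite /At; case: (odd j) => /=; lia).
         move=> c _; rewrite htn' fop_n; congr move; lia.
      -- rewrite idx_mid ?ifF; try lia.
         apply: (step_mixed (A := At j t) (p := (2 * n - t.+1).-1) (s := 2 * n - t.+1) (r := t)) => //;
           try lia; try (rewrite /At; case: (odd j) => /=; lia).
         ++ rewrite /= !inE; lia.
         ++ move=> c; rewrite fop_mid; last lia.
            have -> : 2 * n - (2 * n - t.+1).+1 = t by lia.
            have -> : 2 * n - (2 * n - t.+1) = t.+1 by lia.
            done.
Qed.

Lemma Sp_full b : Sp (fun x => x < 2 * n) b <-> inB n l b.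
Proof.
split; first by case.
move=> hb; split => // r; rewrite -leqNgt => hr; apply: nth_default.
by case/andP: hb => /eqP ->.
Qed.

Lemma Bset_full j b : Bset n l j (2 * n - 1) b <-> inB n l b.
Proof.
rewrite -Sp_full (_ : 2 * n - 1 = (2 * n - 2).+1); last lia.
rewrite /=.
have IH := @Bset_char j (2 * n - 2) (leqnn _).
have -> : idx n j (2 * n - 2).+1 = odd j.+1.
  by rewrite /idx (_ : (2 * n - 2).+1 = 2 * n - 1) ?eqxx ?orbT //; lia.
rewrite /=; case oj: (odd j) => /=.
- apply: (step_mixed (A := At j (2 * n - 2)) (p := 2 * n - 1) (s := 1) (r := 2 * n - 2) (q := 0)) => //;
    try lia; try (rewrite /At oj /=; lia); try (move=> x; rewrite /At oj /=; lia);
    try (rewrite /= !inE; lia).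
- apply: (step_mixed (A := At j (2 * n - 2)) (p := 0) (s := 1) (r := 2 * n - 2) (q := 2 * n - 1)) => //;
    try lia; try (rewrite /At oj /=; lia); try (move=> x; rewrite /At oj /=; lia);
    try (rewrite /= !inE; lia).
  move=> c; rewrite fop_mid //; lia.
Qed.


Definition gg p q k := set_nth 0 (set_nth 0 (nseq (2 * n) 0) p (l - k)) q k.

Lemma nth_gg p q k r : nth 0 (gg p q k) r = if r == q then k else if r == p then l - k else 0.
Proof. rewrite /gg !nth_set nth_nseq; by case: (r == q); case: (r == p); case: (r < 2 * n). Qed.

Lemma fpow_gg i p q : p != q -> p < 2 * n -> q < 2 * n ->
  (forall k, k < l -> fop n i (gg p q k) = move p q (gg p q k)) ->
  fpow n i l (ee p) = Some (ee q).
Proof.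
move=> /eqP pq hp hq H.
have sz : forall k, size (gg p q k) = 2 * n by move=> k; rewrite /gg !size_set_nth size_nseq; lia.
have E0 : ee p = gg p q 0.
  apply: (@eq_from_nth _ 0); first by rewrite sz /ee size_set_nth size_nseq; lia.
  move=> r _; rewrite nth_ee nth_gg; splitifs; lia.
have El : ee q = gg p q l.
  apply: (@eq_from_nth _ 0); first by rewrite sz /ee size_set_nth size_nseq; lia.
  move=> r _; rewrite nth_ee nth_gg; splitifs; lia.
suff S : forall k, k <= l -> fpow n i k (ee p) = Some (gg p q k) by rewrite El S.
elim=> [|k IH] hk; first by rewrite E0.
rewrite /= IH /=; last lia.
rewrite H; last lia.
rewrite /move /decr nth_gg (_ : (p == q) = false); last by apply/eqP.
rewrite eqxx ifT /=; last lia.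
congr Some; apply: (@eq_from_nth _ 0).
- by rewrite /incr /gg !size_set_nth size_nseq; lia.
- move=> r _; rewrite /incr /gg !nth_set nth_nseq.
  splitifs; lia.
Qed.

Definition pos j t := if t == 0 then (if odd j then 2 * n - 1 else 0)
  else if t == 2 * n - 1 then (if odd j then 0 else 2 * n - 1) else t.

Ltac fin := rewrite ?nth_ee ?nth_gg; splitifs;
  try (exfalso; lia); try (congr move; lia); try lia; try done.

Lemma step_facts j t : t <= 2 * n - 2 ->
  [/\ pos j t != pos j t.+1, pos j t < 2 * n, pos j t.+1 < 2 * n,
   phi n (idx n j t.+1) (ee (pos j t)) = l & eps n (idx n j t.+1) (ee (pos j t)) = 0] /\
   (forall k, k < l -> fop n (idx n j t.+1) (gg (pos j t) (pos j t.+1) k) =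
                      move (pos j t) (pos j t.+1) (gg (pos j t) (pos j t.+1) k)).
Proof.
move=> ht.
case: (posnP t) => [->|tpos].
- have E1 : (1 == 2 * n - 1) = false by lia.
  rewrite /pos /idx /= ?E1; case oj: (odd j) => /=.
  + 
    split; [split|]; try lia; try (by rewrite phi_0; fin); try (by rewrite eps_0; fin).
    move=> k hk; rewrite fop_0; fin.
  + split; [split|]; try lia; try (by rewrite phi_mid //; fin); try (by rewrite eps_mid //; fin).
    move=> k hk; rewrite fop_mid //; fin.
- have P1 : pos j t = t by rewrite /pos; splitifs; lia.
  rewrite P1.
  case: (ltnP t.+1 n) => htn.
  + have P2 : pos j t.+1 = t.+1 by rewrite /pos; splitifs; lia.
    rewrite P2 idx_mid ?ifT; try lia.
    split; [split|]; try lia; try (by rewrite phi_mid; try lia; fin); try (by rewrite eps_mid; try lia; fin).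
    move=> k hk; rewrite fop_mid; try lia; fin.
  + case: (t.+1 =P n) => [htn'|htn'].
    * have P2 : pos j t.+1 = t.+1 by rewrite /pos; splitifs; lia.
      rewrite P2 idx_mid ?ifT; try lia. rewrite htn'.
      split; [split|]; try lia; try (by rewrite phi_n; fin); try (by rewrite eps_n; fin).
      move=> k hk; rewrite fop_n; fin.
    * case: (t.+1 =P 2 * n - 1) => [hte|hte].
      -- have -> : idx n j t.+1 = odd j.+1 by rewrite /idx hte eqxx orbT.
         have P2 : pos j t.+1 = if odd j then 0 else 2 * n - 1.
           by rewrite /pos hte eqxx; case: (2 * n - 1 =P 0) => //; lia.
         rewrite P2 /=; case oj: (odd j) => /=.
         ++ split; [split|]; try lia; try (by rewrite phi_0; fin); try (by rewrite eps_0; fin).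
            move=> k hk; rewrite fop_0; fin.
         ++ split; [split|]; try lia; try (by rewrite phi_mid //; fin); try (by rewrite eps_mid //; fin).
            move=> k hk; rewrite fop_mid //; fin.
      -- have P2 : pos j t.+1 = t.+1 by rewrite /pos; splitifs; lia.
         rewrite P2 idx_mid ?ifF; try lia.
         split; [split|]; try lia; try (by rewrite phi_mid; try lia; fin); try (by rewrite eps_mid; try lia; fin).
         move=> k hk; rewrite fop_mid; try lia; fin.
Qed.

Lemma bvec_char j t : t <= 2 * n - 1 -> bvec n l j t = Some (ee (pos j t)).
Proof.
elim: t => [|t IH] ht.
- by rewrite /= /bbar /pos /vec_xb /vec_x /ee /px /pxb /=; case: (odd j).
- rewrite /= IH /=; last lia.
  have [[pq hp hq hphi _] hf] := step_facts j (t := t) ltac:(lia).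
  by rewrite hphi; apply: fpow_gg.
Qed.

Lemma suppB_Sp (Ax Axb : pred nat) b :
  suppB n l Ax Axb b <-> Sp (fun p => if p < n then Ax p.+1 else Axb (2 * n - p)) b.
Proof.
split.
- case=> hb h; split => // p; case: ifP => hpn hA.
  + have := (h p.+1 ltac:(lia)).1 hA; by rewrite /xc /px.
  + case: (ltnP p (2 * n)) => hp2.
    * have := (h (2 * n - p) ltac:(lia)).2 hA; rewrite /xbc /pxb.
      by rewrite (_ : 2 * n - (2 * n - p) = p) //; lia.
    * by apply: nth_default; case/andP: hb => /eqP ->.
- case=> hb h; split => // k hk; split => hA.
  + rewrite /xc /px; apply: h; rewrite ifT; last lia.
    by rewrite (_ : k.-1.+1 = k) //; lia.
  + rewrite /xbc /pxb; apply: h; rewrite ifF; last lia.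
    by rewrite (_ : 2 * n - (2 * n - k) = k) //; lia.
Qed.

End Pf.

Theorem mainTheorem5 (n l : nat) (hn : 3 <= n) (hl : 1 <= l) :
  (* (II) *)
  (forall j, 1 <= j -> forall b, Bset n l j (2 * n - 1) b <-> inB n l b) /\
  (* (III) *)
  (forall j a b, 1 <= j -> 1 <= a <= 2 * n - 1 -> Bset n l j a.-1 b ->
     lam_h l j (idx n j a) <= eps n (idx n j a) b) /\
  (* (IV') *)
  (forall j a, 1 <= j -> 1 <= a <= 2 * n - 1 ->
     let i' := if a == 2 * n - 1 then idx n j.+1 1 else idx n j a.+1 in
     exists b, bvec n l j a = Some b /\ eps n i' b = 0 /\ 0 < phi n i' b) /\
  (forall j, 1 <= j ->
     bvec n l j.+1 0 =
     obind (fun b => fpow n (idx n j.+1 1) (lam_h l j.+1 (idx n j.+1 1)) b)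
           (bvec n l j (2 * n - 1))) /\
  (* description of B^{(j)}_a *)
  (forall j, 1 <= j -> forall b,
     Bset n l j 0 b <-> b = (if odd j then vec_xb n l 1 else vec_x n l 1)) /\
  (forall j, 1 <= j -> forall a, 1 <= a <= n - 1 -> forall b,
     Bset n l j a b <->
     (if odd j then suppB n l (fun k => 2 <= k <= a.+1) (fun k => k == 1) b
      else suppB n l (fun k => k <= a.+1) pred0 b)) /\
  (forall j, 1 <= j -> forall a, 1 <= a <= n - 1 -> forall b,
     Bset n l j (n + a - 1) b <->
     (if odd j then suppB n l (fun k => 2 <= k) (fun k => (n - a + 1 <= k) || (k == 1)) b
      else suppB n l predT (fun k => n - a + 1 <= k) b)) /\
  (* description of b^{(j)}_a *)
  (forall j, 1 <= j ->
     bvec n l j 0 = Some (if odd j then vec_xb n l 1 else vec_x n l 1) /\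
     bvec n l j (2 * n - 1) = Some (if odd j then vec_x n l 1 else vec_xb n l 1)) /\
  (forall j, 1 <= j -> forall a, 1 <= a <= n - 1 ->
     bvec n l j a = Some (vec_x n l a.+1) /\
     bvec n l j (n + a - 1) = Some (vec_xb n l (n - a + 1))).

Proof.
have pos0 : forall j, pos n j 0 = if odd j then 2 * n - 1 else 0 by [].
have posE : forall j, pos n j (2 * n - 1) = if odd j then 0 else 2 * n - 1.
  move=> j; rewrite /pos; have -> : (2 * n - 1 == 0) = false by lia. by rewrite eqxx.
have posM : forall j t, 1 <= t <= 2 * n - 2 -> pos n j t = t.
  move=> j t ht; rewrite /pos; have -> : (t == 0) = false by lia.
  by have -> : (t == 2 * n - 1) = false by lia.
have eeb : forall j, (if odd j then vec_xb n l 1 else vec_x n l 1) = ee n l (pos n j 0).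
  by move=> j; rewrite pos0 /vec_xb /vec_x /ee /px /pxb; case: (odd j).
have eeb' : forall j, (if odd j then vec_x n l 1 else vec_xb n l 1) = ee n l (pos n j (2 * n - 1)).
  by move=> j; rewrite posE /vec_xb /vec_x /ee /px /pxb; case: (odd j).
have lam0 : forall j a, 1 <= a <= 2 * n - 1 -> lam_h l j (idx n j a) = 0.
  move=> j a ha; rewrite /lam_h; case: eqP => // E; exfalso; move: E.
  rewrite /idx; case: ifP => h1; first by rewrite /=; case: (odd j).
  case: ifP => h2; case: (odd j) => /=; lia.
split; [|split; [|split; [|split; [|split; [|split; [|split; [|split]]]]]]].
- move=> j _ b; exact: Bset_full.
- by move=> j a b _ ha _; rewrite lam0.
- move=> j a hj ha /=.
  case: (a =P 2 * n - 1) => [->|hne].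
  + rewrite (bvec_char hn hl) // posE; eexists; split; first reflexivity.
    rewrite /idx /=; case oj: (odd j) => /=.
    * rewrite (eps_mid hn hl) ?(phi_mid hn hl) //; try lia. rewrite !nth_ee. split; splitifs; lia.
    * rewrite eps_0 phi_0 !nth_ee. split; splitifs; lia.
  + rewrite (bvec_char hn hl); last lia.
    have [[_ _ _ hphi heps] _] := step_facts hn hl j (t := a) ltac:(lia).
    eexists; split; first reflexivity. rewrite hphi heps; split => //; lia.
- move=> j hj; rewrite lam0; last lia. rewrite (bvec_char hn hl) // (bvec_char hn hl); last lia.
  rewrite /= pos0 posE /=; by case: (odd j).
- move=> j _ b; rewrite eeb /=. rewrite /bbar /ee /pos /vec_xb /vec_x /px /pxb; by case: (odd j).
- move=> j _ a ha b.
  rewrite (@Bset_char n l hn hl j a); last lia.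
  case oj: (odd j) => /=; rewrite (suppB_Sp hn hl); apply (Sp_ext n l) => x; rewrite /At oj /=; case: ifP => ? /=; lia.
- move=> j _ a ha b.
  rewrite (@Bset_char n l hn hl j (n + a - 1)); last lia.
  case oj: (odd j) => /=; rewrite (suppB_Sp hn hl); apply (Sp_ext n l) => x; rewrite /At oj /=; case: ifP => ? /=; lia.
- move=> j _; rewrite eeb eeb' !(bvec_char hn hl) //; lia.
- move=> j _ a ha; rewrite !(bvec_char hn hl); try lia.
  rewrite !posM; try lia. split; congr Some; try done.
  rewrite /vec_xb /ee /pxb; congr set_nth; lia.
Qed.
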